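(* Let $\underline t\in(\mathbb{C}^* )^4$ be such that $C_{\underline t}$ is smooth. Then every algebraic symplectic form on $C_{\underline t}$ is a constant multiple of the form $\Omega=dX_1\wedge dX_2\big/\frac{\partial R_{\underline t}}{\partial X_3}$.
   Context: With $\bar k_i=k_i-k_i^{-1}$, $\bar u_i=u_i-u_i^{-1}$ for $\underline t=(k_0,k_1,u_0,u_1)$, $R_{\underline t}=X_1X_2X_3-X_1^2-X_2^2-X_3^2+(\bar u_0\bar k_0+\bar k_1\bar u_1)X_1+(\bar u_1\bar u_0+\bar k_0\bar k_1)X_2+(\bar k_0\bar u_1+\bar k_1\bar u_0)X_3+\bar k_0^2+\bar k_1^2+\bar u_0^2+\bar u_1^2-\bar k_0\bar k_1\bar u_0\bar u_1+4$ and $C_{\underline t}=\{R_{\underline t}=0\}\subset\mathbb{C}^3$. The form $\Omega$ (defined where $\partial R_{\underline t}/\partial X_3\neq 0$) extends to a regular nowhere-vanishing 2-form on smooth $C_{\underline t}$. *)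

(* Defs.v *)
From HB Require Import structures.
From mathcomp Require Import all_boot all_order all_algebra.
From mathcomp Require Import complex.
From mathcomp Require Import Rstruct.
From mathcomp Require Import mpoly.

Set Implicit Arguments.
Unset Strict Implicit.
Unset Printing Implicit Defensive.

Import Order.TTheory GRing.Theory Num.Theory.
Local Open Scope ring_scope.

Definition CC : Type := complex Rdefinitions.R.

Notation poly3 := {mpoly CC[3]}.

(* points / tangent vectors of C^3, indexed 0,1,2 for X_1,X_2,X_3 *)
Notation pt3 := ('I_3 -> CC).

Definition i0 : 'I_3 := @Ordinal 3 0 isT.
Definition i1 : 'I_3 := @Ordinal 3 1 isT.
Definition i2 : 'I_3 := @Ordinal 3 2 isT.

Definition X1 : poly3 := 'X_i0.
Definition X2 : poly3 := 'X_i1.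
Definition X3 : poly3 := 'X_i2.

Definition bar (a : CC) : CC := a - a^-1.

(* R_t for t = (k0, k1, u0, u1) *)
Definition Rt (k0 k1 u0 u1 : CC) : poly3 :=
  X1 * X2 * X3 - X1 ^+ 2 - X2 ^+ 2 - X3 ^+ 2
  + (bar u0 * bar k0 + bar k1 * bar u1) *: X1
  + (bar u1 * bar u0 + bar k0 * bar k1) *: X2
  + (bar k0 * bar u1 + bar k1 * bar u0) *: X3
  + (bar k0 ^+ 2 + bar k1 ^+ 2 + bar u0 ^+ 2 + bar u1 ^+ 2
     - bar k0 * bar k1 * bar u0 * bar u1 + 4)%:MP.

Definition on_Ct (P : poly3) (p : pt3) : Prop := P.@[p] = 0.

Definition smooth_hyp (P : poly3) : Prop :=
  forall p : pt3, on_Ct P p -> exists i : 'I_3, (P^`M(i)).@[p] != 0.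

Definition tangent (P : poly3) (p : pt3) (v : pt3) : Prop :=
  \sum_(i < 3) (P^`M(i)).@[p] * v i = 0.

(* An algebraic 2-form on C_t is represented by (the restriction of) a
   polynomial 2-form  a12 dX1^dX2 + a13 dX1^dX3 + a23 dX2^dX3  on C^3;
   two representatives define the same form on C_t iff they agree on all
   tangent spaces of C_t. *)
Record form2 := Form2 { a12 : poly3; a13 : poly3; a23 : poly3 }.

Definition wedge (u v : pt3) (i j : 'I_3) : CC := u i * v j - u j * v i.

Definition form2_eval (w : form2) (p : pt3) (u v : pt3) : CC :=
  (a12 w).@[p] * wedge u v i0 i1
  + (a13 w).@[p] * wedge u v i0 i2
  + (a23 w).@[p] * wedge u v i1 i2.

(* symplectic on C_t: nondegenerate on T_p C_t for every p in C_t
   (closedness is automatic for a 2-form on a surface). Since T_p C_t is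
   2-dimensional for smooth C_t, nondegeneracy means the restriction of w_p
   to T_p C_t is a nonzero alternating form. *)
Definition symplectic_on (P : poly3) (w : form2) : Prop :=
  forall p : pt3, on_Ct P p ->
    forall u, tangent P p u ->
      (forall v, tangent P p v -> form2_eval w p u v = 0) -> forall i, u i = 0.

Definition Omega_eval (P : poly3) (p : pt3) (u v : pt3) : CC :=
  wedge u v i0 i1 / (P^`M(i2)).@[p].

(* Main.v *)
Require Import Defs.
From HB Require Import structures.
From mathcomp Require Import all_boot all_order all_algebra.
From mathcomp Require Import complex Rstruct mpoly.
From mathcomp Require Import ring.
Import GRing.Theory Num.Theory.
Local Open Scope ring_scope.

Lemma sum3 (F : 'I_3 -> CC) : \sum_(i < 3) F i = F i0 + F i1 + F i2.
Proof.
rewrite !big_ord_recl big_ord0 addr0 addrA.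
by congr (F _ + F _ + F _); apply: val_inj.
Qed.

Definition Rf (a b c d : CC) (p : pt3) : CC :=
  p i0 * p i1 * p i2 - p i0 ^+ 2 - p i1 ^+ 2 - p i2 ^+ 2
  + a * p i0 + b * p i1 + c * p i2 + d.

Lemma Rt_eval k0 k1 u0 u1 p :
  (Rt k0 k1 u0 u1).@[p] =
  Rf (bar u0 * bar k0 + bar k1 * bar u1) (bar u1 * bar u0 + bar k0 * bar k1)
     (bar k0 * bar u1 + bar k1 * bar u0)
     (bar k0 ^+ 2 + bar k1 ^+ 2 + bar u0 ^+ 2 + bar u1 ^+ 2
     - bar k0 * bar k1 * bar u0 * bar u1 + 4) p.
Proof.
rewrite /Rt /Rf /X1 /X2 /X3.
by rewrite !(mevalD, mevalB, mevalN, mevalM, mevalZ, mevalC, mevalXU, rmorphXn).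
Qed.


Definition hpoly (P : poly3) (w : form2) : poly3 :=
  a23 w * P^`M(i0) - a13 w * P^`M(i1) + a12 w * P^`M(i2).

Lemma hpoly_eval P w p : (hpoly P w).@[p] =
  (a23 w).@[p] * (P^`M(i0)).@[p] - (a13 w).@[p] * (P^`M(i1)).@[p]
  + (a12 w).@[p] * (P^`M(i2)).@[p].
Proof. rewrite /hpoly. rewrite mevalD. rewrite mevalB. rewrite !mevalM. by []. Qed.

Lemma key_id (A12 A13 A23 g0 g1 g2 u0 u1 u2 v0 v1 v2 : CC) :
  let F := A12 * (u0 * v1 - u1 * v0) + A13 * (u0 * v2 - u2 * v0)
           + A23 * (u1 * v2 - u2 * v1) in
  let H := A23 * g0 - A13 * g1 + A12 * g2 in
  let ug := g0 * u0 + g1 * u1 + g2 * u2 in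
  let vg := g0 * v0 + g1 * v1 + g2 * v2 in
  [/\ g2 * F = (u0 * v1 - u1 * v0) * H + A23 * (u1 * vg - v1 * ug)
                 - A13 * (v0 * ug - u0 * vg),
      g0 * F = (u1 * v2 - u2 * v1) * H - A13 * (u2 * vg - v2 * ug)
                 - A12 * (u1 * vg - v1 * ug) &
      g1 * F = (u2 * v0 - u0 * v2) * H - A23 * (u2 * vg - v2 * ug)
                 + A12 * (u0 * vg - v0 * ug)].
Proof. move=> F H ug vg; rewrite /F /H /ug /vg; split; ring. Qed.

Lemma form_eq P w p u v :
  tangent P p u -> tangent P p v -> (P^`M(i2)).@[p] != 0 ->
  form2_eval w p u v = (hpoly P w).@[p] * Omega_eval P p u v.
Proof.
rewrite /tangent !sum3 => tu tv g2n0.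
rewrite /Omega_eval hpoly_eval /form2_eval /wedge.
have [k _ _] := key_id (a12 w).@[p] (a13 w).@[p] (a23 w).@[p]
  (P^`M(i0)).@[p] (P^`M(i1)).@[p] (P^`M(i2)).@[p] (u i0) (u i1) (u i2)
  (v i0) (v i1) (v i2).
rewrite tu tv !mulr0 !subrr ?mulr0 ?subr0 ?addr0 in k.
move: k g2n0; set F := (_ + _ + _ * (_ - _)); set H := (_ - _ + _).
set c := (u i0 * v i1 - u i1 * v i0); set g2 := (P^`M(i2)).@[p] => k g2n0.
apply: (mulfI g2n0); rewrite k mulrCA [g2 * _]mulrC divfK //; exact: mulrC.
Qed.


Lemma h_nonzero P w : smooth_hyp P -> symplectic_on P w ->
  forall p, on_Ct P p -> (hpoly P w).@[p] != 0.
Proof.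
move=> sm sy p onp; apply/negP => /eqP h0.
have [k gk] := sm p onp.
move: h0; rewrite hpoly_eval.
set g0 := (P^`M(i0)).@[p]; set g1 := (P^`M(i1)).@[p]; set g2 := (P^`M(i2)).@[p].
move=> hH.
have kill : forall u, tangent P p u -> forall v, tangent P p v ->
    form2_eval w p u v = 0.
  move=> u tu v tv; move: tu tv; rewrite /tangent !sum3 -/g0 -/g1 -/g2 => tu tv.
  have [e2 e0 e1] := key_id (a12 w).@[p] (a13 w).@[p] (a23 w).@[p]
    g0 g1 g2 (u i0) (u i1) (u i2) (v i0) (v i1) (v i2).
  rewrite hH tu tv !mulr0 ?subrr ?mulr0 ?subr0 ?addr0 in e2 e0 e1.
  rewrite /form2_eval /wedge.
  have : (k == i0) || (k == i1) || (k == i2).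
    by case: k {gk} => [[|[|[|]]] ?].
  case/orP => [/orP [] | ] /eqP ek; move: gk; rewrite ek -/g0 -/g1 -/g2 => gk.
  - by apply: (mulfI gk); rewrite e0 mulr0.
  - by apply: (mulfI gk); rewrite e1 mulr0.
  - by apply: (mulfI gk); rewrite e2 mulr0.
have [g01 | g01] := boolP ((g0 != 0) || (g1 != 0)).
  pose u : pt3 := fun i => nth 0 [:: g1; - g0; 0] i.
  have tu : tangent P p u.
    by rewrite /tangent sum3 -/g0 -/g1 -/g2 /u /=; ring.
  have := sy p onp u tu (kill u tu).
  move: g01 => /orP [] nz z.
  - by move: (z i1); rewrite /u /= => /eqP; rewrite oppr_eq0 (negbTE nz).
  - by move: (z i0); rewrite /u /= => /eqP; rewrite (negbTE nz).
move: g01; rewrite negb_or !negbK => /andP [/eqP e0 /eqP e1].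
pose u : pt3 := fun i => nth 0 [:: 1; 0; 0] i.
have tu : tangent P p u.
  by rewrite /tangent sum3 -/g0 -/g1 -/g2 /u /= e0 e1; ring.
have := sy p onp u tu (kill u tu).
by move=> /(_ i0); rewrite /u /= => /eqP; rewrite oner_eq0.
Qed.

Lemma exists_nonroot (p : {poly CC}) (pn0 : p != 0) : exists t, p.[t] != 0.
Proof.
pose rs := [seq i%:R : CC | i <- iota 0 (size p)].
have : has (fun x => p.[x] != 0) rs.
  apply/negPn/negP => H.
  have : (size rs < size p)%N.
    apply: max_poly_roots => //.
      apply/allP => x xin; apply/rootP.
      by move/hasPn: H => /(_ x xin); rewrite negbK => /eqP.
    rewrite map_inj_uniq ?iota_uniq // => i j /eqP; rewrite eqr_nat => /eqP.
    done.
  by rewrite size_map size_iota ltnn.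
by case/hasP => x _ nz; exists x.
Qed.

Lemma poly_zero_cofinite (E p : {poly CC}) : E != 0 ->
  (forall t, E.[t] != 0 -> p.[t] = 0) -> p = 0.
Proof.
move=> En0 H; apply/eqP/negPn/negP => pn0.
have [t] := @exists_nonroot (E * p) (mulf_neq0 En0 pn0).
rewrite hornerM mulf_eq0 negb_or => /andP [Et pt].
by move: pt; rewrite H // eqxx.
Qed.

Lemma quad_root (B C : CC) : exists z : CC, z ^+ 2 = B * z + C.
Proof.
exists ((B + sqrtC (B ^+ 2 + 4 * C)) / 2).
have s2 := sqrtCK (B ^+ 2 + 4 * C).
move: (sqrtC _) s2 => s s2.
have two : (2 : CC) != 0 by rewrite pnatr_eq0.
apply/eqP; rewrite -subr_eq0; apply/eqP.
have -> : ((B + s) / 2) ^+ 2 - (B * ((B + s) / 2) + C) = (s ^+ 2 - (B ^+ 2 + 4 * C)) / 4.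
  by field.
by rewrite s2 subrr mul0r.
Qed.

Lemma monomial (p : {poly CC}) : (forall r, r != 0 -> p.[r] != 0) ->
  exists a n, p = a *: 'X^n.
Proof.
move=> H.
have [pz|pn0] := eqVneq p 0.
  by exists 0, 0%N; rewrite scale0r.
have [r pr] := closed_field_poly_normal p.
have r0 : all (fun z => z == 0) r.
  apply/allP => z zr; apply/negPn/negP => zn0.
  have := H z zn0; rewrite pr hornerZ horner_prod.
  by rewrite (big_rem z) //= !hornerE subrr /= mulr0 mul0r eqxx.
exists (lead_coef p), (size r).
rewrite {1}pr; congr (_ *: _).
elim: r r0 {pr} => [|z r IH] /=; first by rewrite big_nil expr0.
by case/andP => /eqP -> /IH; rewrite big_cons subr0 exprS => ->.
Qed.

Definition hmap (S : nzRingType) (f : CC -> S) (v : 'I_3 -> S) (w : S) (M : nat)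
  (p : poly3) : S :=
  \sum_(m <- msupp p) f p@_m * mmap1 v m * w ^+ (M - mdeg m).
Arguments hmap {S}.

Lemma hmap_morph (S T : comNzRingType) (g : {rmorphism S -> T}) (f : CC -> S) (v : 'I_3 -> S) (w : S) M p :
  g (hmap f v w M p) = hmap (g \o f) (g \o v) (g w) M p.
Proof.
rewrite rmorph_sum; apply: eq_bigr => m _.
rewrite !rmorphM rmorphXn /mmap1 rmorph_prod; congr (_ * _ * _).
by apply: eq_bigr => i _; rewrite rmorphXn.
Qed.

Lemma hmap_eval (v : 'I_3 -> CC) w M p : w != 0 -> (msize p <= M)%N ->
  hmap id v w M p = w ^+ M * p.@[fun i => v i / w].
Proof.
move=> wn0 hM; rewrite mevalE mulr_sumr; apply: eq_big_seq => m mi.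
have lt := msize_mdeg_lt mi.
have le : (mdeg m <= M)%N by apply: leq_trans hM; apply: ltnW.
rewrite exprB ?unitfE // /mmap1.
have -> : \prod_i (v i / w) ^+ m i = (\prod_i v i ^+ m i) / w ^+ mdeg m.
  rewrite mdegE -prodrXr -prodf_div; apply: eq_bigr => i _.
  by rewrite exprMn exprVn.
rewrite /=; field.
by rewrite expf_neq0.
Qed.

Definition Gx {R : comNzRingType} (a b c d l : R) :=
  (-(l ^+ 2 + 1) ^+ 2 + a * l * (l ^+ 2 + 1) + d * l ^+ 2) * (l ^+ 2 - 1) ^+ 2
   - l ^+ 3 * (b * l + c) * (b + c * l).
Definition Sx {R : comNzRingType} (a b c d l r : R) := r ^+ 2 + l ^+ 2 * (b * l + c) * r.
Definition Tx {R : comNzRingType} (a b c d l r : R) := Gx a b c d l - l * (b + c * l) * r.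
Definition Vx0 {R : comNzRingType} (a b c d l r : R) := (l ^+ 2 + 1) * (l ^+ 2 - 1) ^+ 2 * r.
Definition Vx1 {R : comNzRingType} (a b c d l r : R) := l ^+ 2 * Tx a b c d l r - Sx a b c d l r.
Definition Vx2 {R : comNzRingType} (a b c d l r : R) := l * (Tx a b c d l r - Sx a b c d l r).
Definition Wx {R : comNzRingType} (a b c d l r : R) := l * (l ^+ 2 - 1) ^+ 2 * r.
Definition Gam {R : comNzRingType} (a b c d x : R) :=
  (-x ^+ 2 + a * x + d) * (x ^+ 2 - 4%:R) - (b ^+ 2 + c ^+ 2 + b * c * x).

Section Morph.
Variables (R S : comNzRingType) (g : {rmorphism R -> S}) (a b c d l r : R).
Lemma Gx_morph : g (Gx a b c d l) = Gx (g a) (g b) (g c) (g d) (g l).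
Proof. by rewrite /Gx !(rmorphB, rmorphD, rmorphM, rmorphXn, rmorphN, rmorph1). Qed.
Lemma Vx0_morph : g (Vx0 a b c d l r) = Vx0 (g a) (g b) (g c) (g d) (g l) (g r).
Proof. by rewrite /Vx0 !(rmorphB, rmorphD, rmorphM, rmorphXn, rmorphN, rmorph1). Qed.
Lemma Vx1_morph : g (Vx1 a b c d l r) = Vx1 (g a) (g b) (g c) (g d) (g l) (g r).
Proof. by rewrite /Vx1 /Tx /Sx /Gx !(rmorphB, rmorphD, rmorphM, rmorphXn, rmorphN, rmorph1). Qed.
Lemma Vx2_morph : g (Vx2 a b c d l r) = Vx2 (g a) (g b) (g c) (g d) (g l) (g r).
Proof. by rewrite /Vx2 /Tx /Sx /Gx !(rmorphB, rmorphD, rmorphM, rmorphXn, rmorphN, rmorph1). Qed.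
Lemma Wx_morph : g (Wx a b c d l r) = Wx (g a) (g b) (g c) (g d) (g l) (g r).
Proof. by rewrite /Wx !(rmorphB, rmorphD, rmorphM, rmorphXn, rmorphN, rmorph1). Qed.
Lemma Gam_morph : g (Gam a b c d l) = Gam (g a) (g b) (g c) (g d) (g l).
Proof. by rewrite /Gam !(rmorphB, rmorphD, rmorphM, rmorphXn, rmorphN, rmorph1, rmorph_nat). Qed.
End Morph.

Definition mk3 (x y z : CC) : pt3 := fun i => nth 0 [:: x; y; z] i.

Lemma mk3_eta (p : pt3) i : p i = mk3 (p i0) (p i1) (p i2) i.
Proof.
by case: i => [[|[|[|]]] Hi] //=; congr p; apply: val_inj.
Qed.

Section Scalar.
Variables (a b c d : CC).

Definition Pf (l : CC) := l * (b * l + c) / (l ^+ 2 - 1).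
Definition Qf (l : CC) := (b + c * l) / (l ^+ 2 - 1).
Definition sf (l r : CC) := Pf l + r / (l * (l ^+ 2 - 1)).
Definition tf (l r : CC) := - Qf l + Gx a b c d l / (l * (l ^+ 2 - 1) * r).
Definition ptf (l s t : CC) : pt3 :=
  mk3 (l + l^-1) ((l ^+ 2 * t - s) / (l ^+ 2 - 1)) ((t - s) * l / (l ^+ 2 - 1)).
Definition Phi (l r : CC) := ptf l (sf l r) (tf l r).

Lemma Rdecomp l y z : l != 0 -> l ^+ 2 - 1 != 0 ->
  Rf a b c d (mk3 (l + l^-1) y z) = Gx a b c d l / (l ^+ 2 * (l ^+ 2 - 1) ^+ 2)
     - (y - l * z - Pf l) * (y - z / l + Qf l).
Proof.
move=> l0 l1; rewrite /Rf /mk3 /= /Gx /Pf /Qf.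
by field; rewrite l0 l1.
Qed.

Lemma ptf_st l s t : l != 0 -> l ^+ 2 - 1 != 0 ->
  ptf l s t i1 - l * ptf l s t i2 = s /\ ptf l s t i1 - ptf l s t i2 / l = t.
Proof. by move=> l0 l1; rewrite /ptf /mk3 /=; split; field; rewrite ?l0 ?l1. Qed.

Definition good (l : CC) := [&& l != 0, l ^+ 2 - 1 != 0 & Gx a b c d l != 0].

Lemma Phi_on l r : good l -> r != 0 -> Rf a b c d (Phi l r) = 0.
Proof.
case/and3P => l0 l1 g0 r0.
rewrite /Phi.
have [e1 e2] := ptf_st l (sf l r) (tf l r) l0 l1.
rewrite {1}/ptf Rdecomp //.
rewrite /ptf /mk3 /= in e1 e2.
rewrite e1 e2 /sf /tf.
move: (Gx a b c d l) => G.
by field; rewrite l0 l1 r0.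
Qed.

Lemma Phi_surj l y z : good l -> Rf a b c d (mk3 (l + l^-1) y z) = 0 ->
  exists r, r != 0 /\ forall i, mk3 (l + l^-1) y z i = Phi l r i.
Proof.
case/and3P => l0 l1 g0; rewrite Rdecomp // => /eqP; rewrite subr_eq0 => /eqP E.
set e := y - l * z - Pf l in E; set f := y - z / l + Qf l in E.
have e0 : e != 0.
  apply/negP => /eqP ez; move: E; rewrite ez mul0r => /eqP.
  by rewrite mulf_eq0 invr_eq0 (negbTE g0) /= mulf_eq0 expf_eq0 expf_eq0 (negbTE l0) (negbTE l1).
have GE : Gx a b c d l = e * f * (l ^+ 2 * (l ^+ 2 - 1) ^+ 2).
  by rewrite -E divfK // mulf_neq0 // expf_neq0.
exists (e * (l * (l ^+ 2 - 1))); split.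
  by rewrite !mulf_neq0.
rewrite /Phi.
have -> : sf l (e * (l * (l ^+ 2 - 1))) = y - l * z.
  by rewrite /sf /e; field; rewrite l0 l1.
have -> : tf l (e * (l * (l ^+ 2 - 1))) = y - z / l.
  rewrite /tf GE /f; field; rewrite ?l0 ?l1 ?e0 //.
move=> i; rewrite /ptf /mk3; case: i => [[|[|[|]]] Hi] //=; field; by rewrite ?l0 ?l1.
Qed.

Lemma Gx_inv l : l != 0 -> Gx a b c d l^-1 = Gx a b c d l / l ^+ 8.
Proof. by move=> l0; rewrite /Gx; field; rewrite l0. Qed.

Lemma Phi_sym l r : good l -> r != 0 ->
  good l^-1 /\ - Gx a b c d l / (l ^+ 4 * r) != 0 /\
  forall i, Phi l^-1 (- Gx a b c d l / (l ^+ 4 * r)) i = Phi l r i.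
Proof.
case/and3P => l0 l1 g0 r0.
have l1' : 1 + -1 * l ^+ 2 != 0 by rewrite mulN1r -opprB oppr_eq0.
have li0 : l^-1 != 0 by rewrite invr_eq0.
have li1 : l^-1 ^+ 2 - 1 != 0.
  have -> : l^-1 ^+ 2 - 1 = - (l ^+ 2 - 1) / l ^+ 2 by field.
  by rewrite mulf_neq0 ?oppr_eq0 ?invr_eq0 ?expf_neq0.
split.
  by rewrite /good li0 li1 Gx_inv // mulf_neq0 ?invr_eq0 ?expf_neq0.
split.
  by rewrite mulf_neq0 ?oppr_eq0 ?invr_eq0 ?mulf_neq0 ?expf_neq0.
rewrite /Phi.
have -> : sf l^-1 (- Gx a b c d l / (l ^+ 4 * r)) = tf l r.
  rewrite /sf /tf /Pf /Qf; move: (Gx a b c d l) g0 => G g0.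
  by field; rewrite ?l0 ?l1 ?r0 ?l1'.
have -> : tf l^-1 (- Gx a b c d l / (l ^+ 4 * r)) = sf l r.
  rewrite /sf /tf /Pf /Qf Gx_inv //; move: (Gx a b c d l) g0 => G g0.
  by field; rewrite ?l0 ?l1 ?r0 ?g0 ?l1'.
move: (sf l r) (tf l r) => s t.
move=> i; rewrite /ptf /mk3; case: i => [[|[|[|]]] Hi] //=;
  rewrite ?invrK; try by rewrite addrC.
- by field; rewrite ?l0 ?l1.
- by field; rewrite ?l0 ?l1.
Qed.

Lemma Phi_V l r : good l -> r != 0 -> forall i,
  Phi l r i = mk3 (Vx0 a b c d l r) (Vx1 a b c d l r) (Vx2 a b c d l r) i
              / Wx a b c d l r.
Proof.
case/and3P => l0 l1 g0 r0.
rewrite /Phi /ptf /sf /tf /Pf /Qf /Vx0 /Vx1 /Vx2 /Wx /Tx /Sx.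
move: (Gx a b c d l) => G.
move=> i; rewrite /mk3; case: i => [[|[|[|]]] Hi] //=; by field; rewrite ?l0 ?l1 ?r0.
Qed.
End Scalar.

Notation Sring := {poly {poly CC}}.
Definition cst (k : CC) : Sring := k%:P%:P.
Definition evl (l : CC) : Sring -> {poly CC} := map_poly (horner_eval l).
Definition ev2 (l r : CC) : {rmorphism Sring -> CC} := (horner_eval r \o evl l)%FUN.

Lemma ev2E l r P : ev2 l r P = (evl l P).[r].
Proof. by []. Qed.
Lemma ev2_cst l r k : ev2 l r (cst k) = k.
Proof. by rewrite ev2E /evl /cst map_polyC /= hornerC /horner_eval hornerC. Qed.
Lemma ev2_l l r : ev2 l r ('X)%:P = l.
Proof. by rewrite ev2E /evl map_polyC /= hornerC /horner_eval hornerX. Qed.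
Lemma ev2_r l r : ev2 l r 'X = r.
Proof. by rewrite ev2E /evl map_polyX hornerX. Qed.

Lemma hmap_ext (S : nzRingType) (f1 f2 : CC -> S) (v1 v2 : 'I_3 -> S) w M p :
  f1 =1 f2 -> v1 =1 v2 -> hmap f1 v1 w M p = hmap f2 v2 w M p.
Proof.
move=> ef ev; apply: eq_bigr => m _; rewrite ef /mmap1; congr (_ * _ * _).
by apply: eq_bigr => i _; rewrite ev.
Qed.

Section FiberA.
Variables (a b c d : CC) (h : poly3).
Hypothesis Hnz : forall p, Rf a b c d p = 0 -> h.@[p] != 0.

Definition lv : Sring := ('X)%:P.
Definition rv : Sring := 'X.
Definition Vp : 'I_3 -> Sring := fun i =>
  nth 0 [:: Vx0 (cst a) (cst b) (cst c) (cst d) lv rv;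
            Vx1 (cst a) (cst b) (cst c) (cst d) lv rv;
            Vx2 (cst a) (cst b) (cst c) (cst d) lv rv] i.
Definition Wp : Sring := Wx (cst a) (cst b) (cst c) (cst d) lv rv.
Definition MM := msize h.
Definition NN : Sring := hmap cst Vp Wp MM h.

Lemma NN_eval l r : good a b c d l -> r != 0 ->
  (evl l NN).[r] = (Wx a b c d l r) ^+ MM * h.@[Phi a b c d l r].
Proof.
move=> gl r0.
have W0 : Wx a b c d l r != 0.
  case/and3P: gl => l0 l1 _; by rewrite /Wx !mulf_neq0 // expf_neq0.
rewrite -ev2E /NN hmap_morph.
have -> : ev2 l r Wp = Wx a b c d l r.
  by rewrite /Wp Wx_morph !ev2_cst ev2_l ev2_r.
rewrite (@hmap_ext _ _ id _ (fun i => mk3 (Vx0 a b c d l r) (Vx1 a b c d l r) (Vx2 a b c d l r) i)).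
- rewrite hmap_eval //; congr (_ * _); apply: meval_eq => i.
  by rewrite Phi_V.
- by move=> k; exact: ev2_cst.
- have E0 : ev2 l r (Vx0 (cst a) (cst b) (cst c) (cst d) lv rv) = Vx0 a b c d l r.
    by rewrite Vx0_morph !ev2_cst ev2_l ev2_r.
  have E1 : ev2 l r (Vx1 (cst a) (cst b) (cst c) (cst d) lv rv) = Vx1 a b c d l r.
    by rewrite Vx1_morph !ev2_cst ev2_l ev2_r.
  have E2 : ev2 l r (Vx2 (cst a) (cst b) (cst c) (cst d) lv rv) = Vx2 a b c d l r.
    by rewrite Vx2_morph !ev2_cst ev2_l ev2_r.
  case=> [[|[|[|]]] Hi].
  + exact: E0.
  + exact: E1.
  + exact: E2.
  + by [].
Qed.
End FiberA.

Section Good.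
Variables (a b c d : CC).

Definition Gampoly : {poly CC} := Gam a%:P b%:P c%:P d%:P 'X.
Definition Gpoly : {poly CC} := Gx a%:P b%:P c%:P d%:P 'X.
Definition Expoly : {poly CC} := ('X ^+ 2 - 4%:R) * Gampoly.

Lemma Gampoly_eval x : Gampoly.[x] = Gam a b c d x.
Proof.
have := @Gam_morph _ _ (horner_eval x) a%:P b%:P c%:P d%:P 'X.
by rewrite /= !horner_evalE !hornerC hornerX => <-.
Qed.

Lemma Gpoly_eval x : Gpoly.[x] = Gx a b c d x.
Proof.
have := @Gx_morph _ _ (horner_eval x) a%:P b%:P c%:P d%:P 'X.
by rewrite /= !horner_evalE !hornerC hornerX => <-.
Qed.

Lemma Expoly_eval x : Expoly.[x] = (x ^+ 2 - 4%:R) * Gam a b c d x.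
Proof. by rewrite /Expoly hornerM Gampoly_eval hornerD hornerN hornerXn hornerMn hornerC. Qed.

Lemma Gampoly_neq0 : Gampoly != 0.
Proof.
apply/negP => /eqP G0.
have H x : Gam a b c d x = 0 by rewrite -Gampoly_eval G0 horner0.
have two : (2 : CC) != 0 by rewrite pnatr_eq0.
have e1 : (b + c) ^+ 2 = 0.
  have -> : (b + c) ^+ 2 = - Gam a b c d 2 by rewrite /Gam; ring.
  by rewrite H oppr0.
have e2 : (b - c) ^+ 2 = 0.
  have -> : (b - c) ^+ 2 = - Gam a b c d (-2) by rewrite /Gam; ring.
  by rewrite H oppr0.
move/eqP: e1; rewrite expf_eq0 /= => /eqP e1.
move/eqP: e2; rewrite expf_eq0 /= => /eqP e2.
have b0 : b = 0.
  have -> : b = ((b + c) + (b - c)) / 2 by field.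
  by rewrite e1 e2 addr0 mul0r.
have c0 : c = 0.
  have -> : c = ((b + c) - (b - c)) / 2 by field.
  by rewrite e1 e2 subr0 mul0r.
have : (840%:R : CC) = - (84%:R * Gam a b c d 3%:R - 70%:R * Gam a b c d 4%:R
          + 20%:R * Gam a b c d 5%:R).
  by rewrite /Gam b0 c0; ring.
by rewrite !H !mulr0 subrr addr0 oppr0 => /eqP; rewrite pnatr_eq0.
Qed.

Lemma Expoly_neq0 : Expoly != 0.
Proof.
rewrite /Expoly mulf_neq0 ?Gampoly_neq0 //.
apply/negP => /eqP E; have := congr1 (horner^~ 0) E.
rewrite hornerD hornerN hornerXn hornerMn hornerC horner0 expr0n /= sub0r => /eqP; rewrite oppr_eq0 pnatr_eq0 //.
Qed.

Lemma Gx_Gam l : l != 0 -> Gx a b c d l = l ^+ 4 * Gam a b c d (l + l^-1).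
Proof. by move=> l0; rewrite /Gx /Gam; field; rewrite l0. Qed.

Lemma good_of_x x : Expoly.[x] != 0 ->
  exists l, good a b c d l /\ l + l^-1 = x.
Proof.
rewrite Expoly_eval mulf_eq0 negb_or => /andP [x4 gx].
have [l hl] := quad_root x (-1).
have l0 : l != 0.
  apply/negP => /eqP l0; move: hl; rewrite l0 expr0n mulr0 add0r => /eqP.
  by rewrite eq_sym oppr_eq0 oner_eq0.
have lx : l + l^-1 = x.
  apply: (mulfI l0); rewrite mulrDr divff // -expr2 hl; ring.
exists l; split => //.
apply/and3P; split => //.
  apply/negP => /eqP l1.
  have li : l^-1 = l.
    apply: (mulfI l0); rewrite divff // -expr2; apply/eqP; rewrite eq_sym -subr_eq0 l1 //.
  move: x4; rewrite -lx li.
  have -> : (l + l) ^+ 2 - 4%:R = 4%:R * (l ^+ 2 - 1) by ring.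
  by rewrite l1 mulr0 eqxx.
by rewrite Gx_Gam // lx mulf_neq0 // expf_neq0.
Qed.

Lemma exists_good : exists l, good a b c d l.
Proof.
have [x hx] := @exists_nonroot Expoly Expoly_neq0.
by have [l [gl _]] := good_of_x x hx; exists l.
Qed.

Lemma Gpoly_neq0 : Gpoly != 0.
Proof.
have [l /and3P [_ _ gl]] := exists_good.
by apply/negP => /eqP G0; move: gl; rewrite -Gpoly_eval G0 horner0 eqxx.
Qed.
End Good.

Section FiberB.
Variables (a b c d : CC) (h : poly3).
Hypothesis Hnz : forall p, Rf a b c d p = 0 -> h.@[p] != 0.

Local Notation N := (NN a b c d h).
Local Notation M := (MM h).

Lemma W_neq0 l r : good a b c d l -> r != 0 -> Wx a b c d l r != 0.
Proof. by case/and3P => l0 l1 _ r0; rewrite /Wx !mulf_neq0 // expf_neq0. Qed.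

Lemma Nl_noroot l : good a b c d l -> forall r, r != 0 -> (evl l N).[r] != 0.
Proof.
move=> gl r r0; rewrite NN_eval // mulf_neq0 ?expf_neq0 ?W_neq0 //.
by apply: Hnz; apply: Phi_on.
Qed.

Lemma N_neq0 : N != 0.
Proof.
have [l gl] := exists_good a b c d.
apply/negP => /eqP N0.
by have := @Nl_noroot l gl 1 (oner_neq0 _); rewrite N0 /evl map_poly0 horner0 eqxx.
Qed.

Definition KK := (size N).-1.

Lemma NK_neq0 : N`_KK != 0.
Proof. by have := N_neq0; rewrite -lead_coef_eq0. Qed.

Lemma N_coef j : j != KK -> N`_j = 0.
Proof.
move=> jK; apply/eqP/negPn/negP => Nj.
have X0 : ('X : {poly CC}) != 0 by rewrite polyX_eq0.
have X1 : ('X ^+ 2 - 1 : {poly CC}) != 0.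
  apply/negP => /eqP E; have := congr1 (horner^~ 0) E.
  by rewrite hornerD hornerN hornerXn hornerC horner0 expr0n /= sub0r => /eqP; rewrite oppr_eq0 oner_eq0.
have E0 : Gpoly a b c d * ('X * ('X ^+ 2 - 1)) * N`_j * N`_KK != 0.
  by rewrite !mulf_neq0 // ?Gpoly_neq0 ?NK_neq0.
have [l] := @exists_nonroot _ E0.
rewrite !hornerM !mulf_eq0 !negb_or Gpoly_eval hornerX hornerD hornerN hornerC.
move=> /andP [/andP [/and3P [g0 l0 l1] nj] nk].
rewrite horner_exp hornerX in l1.
have gl : good a b c d l by apply/and3P.
have [al [n En]] := @monomial (evl l N) (@Nl_noroot l gl).
have cj := coef_map (horner_eval l) N j.
have cK := coef_map (horner_eval l) N KK.
rewrite -/(evl l N) En coefZ coefXn in cj.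
rewrite -/(evl l N) En coefZ coefXn in cK.
move: nj nk; rewrite -!horner_evalE -cj -cK.
case: (eqVneq j n) => [ejn | jn]; last by rewrite mulr0 eqxx.
case: (eqVneq KK n) => [Kn | Kn]; last by rewrite mulr0 eqxx.
by move: jK; rewrite ejn Kn eqxx.
Qed.

Lemma N_form l r : (evl l N).[r] = (N`_KK).[l] * r ^+ KK.
Proof.
have NE : N = (N`_KK)%:P * 'X^KK.
  apply/polyP => j; rewrite coefCM coefXn.
  by case: (eqVneq j KK) => [-> | jK]; [rewrite mulr1 | rewrite mulr0 N_coef].
by rewrite {1}NE /evl rmorphM /= map_polyC map_polyXn hornerCM hornerXn.
Qed.

Lemma key_eq l r : good a b c d l -> r != 0 ->
  (N`_KK).[l] * r ^+ KK =
  (l * (l ^+ 2 - 1) ^+ 2) ^+ M * r ^+ M * h.@[Phi a b c d l r].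
Proof. by move=> gl r0; rewrite -N_form NN_eval // /Wx exprMn. Qed.

Lemma KM : KK = M.
Proof.
have [l gl] := exists_good a b c d.
have two : (2 : CC) != 0 by rewrite pnatr_eq0.
have [gl' [r1 E1]] := @Phi_sym a b c d l 1 gl (oner_neq0 _).
have [_ [r2 E2]] := @Phi_sym a b c d l 2 gl two.
set C := - Gx a b c d l / (l ^+ 4 * 1) in r1 E1.
have eC : - Gx a b c d l / (l ^+ 4 * 2) = C / 2.
  by rewrite /C mulr1 invfM mulrA.
rewrite eC in r2 E2.
clearbody C.
have H1 := meval_eq h E1; have H2 := meval_eq h E2.
have k1 := @key_eq l 1 gl (oner_neq0 _).
have k2 := @key_eq l 2 gl two.
have k1' := @key_eq l^-1 C gl' r1.
have k2' := @key_eq l^-1 (C / 2) gl' r2.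
rewrite H1 in k1'; rewrite H2 in k2'.
move: k1 k2 k1' k2'.
set A := (N`_KK).[l]; set A' := (N`_KK).[l^-1].
set w := (l * (l ^+ 2 - 1) ^+ 2) ^+ M; set w' := (l^-1 * (l^-1 ^+ 2 - 1) ^+ 2) ^+ M.
set H1' := h.@[Phi a b c d l 1]; set H2' := h.@[Phi a b c d l 2].
have hn1 : H1' != 0 := Hnz _ (@Phi_on a b c d l 1 gl (oner_neq0 _)).
have hn2 : H2' != 0 := Hnz _ (@Phi_on a b c d l 2 gl two).
have C0 : C != 0 by [].
have wn : w != 0.
  by case/and3P: gl => l0 l1 _; rewrite expf_neq0 // mulf_neq0 // expf_neq0.
have wn' : w' != 0.
  by case/and3P: gl' => l0 l1 _; rewrite expf_neq0 // mulf_neq0 // expf_neq0.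
rewrite !expr1n !mulr1 !expr_div_n.
set P2 := 2 ^+ KK; set Q2 := 2 ^+ M; set CK := C ^+ KK; set CM := C ^+ M.
have P0 : P2 != 0 by rewrite expf_neq0.
have Q0 : Q2 != 0 by rewrite expf_neq0.
have CK0 : CK != 0 by rewrite expf_neq0.
have CM0 : CM != 0 by rewrite expf_neq0.
move=> e1 e2 e1' e2'.
have eP : P2 ^+ 2 = Q2 ^+ 2.
  have eA : A = w * H1' by [].
  have eA' : A' * CK = w' * CM * H1' by rewrite e1'.
  have h2 : H2' = A * P2 / (w * Q2) by rewrite e2; field; rewrite ?wn ?wn' ?CM0 ?CK0 ?Q0 ?P0 ?two.
  have h2' : H2' = A' * (CK / P2) / (w' * (CM / Q2)) by rewrite e2'; field; rewrite ?wn ?wn' ?CM0 ?CK0 ?Q0 ?P0 ?two.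
  have : A * P2 / (w * Q2) = A' * (CK / P2) / (w' * (CM / Q2)) by rewrite -h2 -h2'.
  rewrite eA.
  have -> : A' * (CK / P2) / (w' * (CM / Q2)) = (A' * CK) * Q2 / (w' * CM * P2).
    by field; rewrite ?wn ?wn' ?CM0 ?CK0 ?Q0 ?P0 ?two.
  rewrite eA' => /eqP; rewrite -subr_eq0 => /eqP E.
  have : H1' * (P2 ^+ 2 - Q2 ^+ 2) / (P2 * Q2) = 0.
    by rewrite -E; field; rewrite ?wn ?wn' ?CM0 ?CK0 ?Q0 ?P0 ?two.
  move/eqP; rewrite !mulf_eq0 invr_eq0 (negbTE hn1) mulf_eq0 (negbTE P0) (negbTE Q0) /=.
  by rewrite subr_eq0 orbF => /eqP.
move: eP; rewrite /P2 /Q2 -!exprM -!natrX => /eqP; rewrite eqr_nat eqn_exp2l //.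
by rewrite !muln2 => /eqP /double_inj.
Qed.

Lemma fiber_const l r1 r2 : good a b c d l -> r1 != 0 -> r2 != 0 ->
  h.@[Phi a b c d l r1] = h.@[Phi a b c d l r2].
Proof.
move=> gl n1 n2.
have k1 := @key_eq l r1 gl n1; have k2 := @key_eq l r2 gl n2.
rewrite KM in k1 k2.
have wn : (l * (l ^+ 2 - 1) ^+ 2) ^+ M != 0.
  by case/and3P: gl => l0 l1 _; rewrite expf_neq0 // mulf_neq0 // expf_neq0.
have e1 : (N`_M).[l] = (l * (l ^+ 2 - 1) ^+ 2) ^+ M * h.@[Phi a b c d l r1].
  by apply: (mulIf (expf_neq0 M n1)); rewrite k1 mulrAC.
have e2 : (N`_M).[l] = (l * (l ^+ 2 - 1) ^+ 2) ^+ M * h.@[Phi a b c d l r2].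
  by apply: (mulIf (expf_neq0 M n2)); rewrite k2 mulrAC.
by apply: (mulfI wn); rewrite -e1 -e2.
Qed.

Lemma fiberA x : (Expoly a b c d).[x] != 0 -> forall y z y' z',
  Rf a b c d (mk3 x y z) = 0 -> Rf a b c d (mk3 x y' z') = 0 ->
  h.@[mk3 x y z] = h.@[mk3 x y' z'].
Proof.
move=> ex y z y' z'.
have [l [gl <-]] := @good_of_x a b c d x ex.
move=> /(@Phi_surj a b c d l _ _ gl) [r1 [n1 E1]] /(@Phi_surj a b c d l _ _ gl) [r2 [n2 E2]].
rewrite (meval_eq h E1) (meval_eq h E2).
exact: (@fiber_const l r1 r2 gl n1 n2).
Qed.
End FiberB.

Lemma ev2_C x z (p : {poly CC}) : ev2 x z p%:P = p.[x].
Proof. by rewrite ev2E /evl map_polyC hornerC. Qed.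

Lemma curve_zero (F : Sring) (B Cc E : {poly CC}) : E != 0 ->
  (forall x, E.[x] != 0 -> forall z, z ^+ 2 = B.[x] * z + Cc.[x] -> ev2 x z F = 0) ->
  forall x z, z ^+ 2 = B.[x] * z + Cc.[x] -> ev2 x z F = 0.
Proof.
move=> En0 H.
pose p : Sring := ('X - B%:P) * 'X.
pose Q : Sring := p - Cc%:P.
have sp : size p = 3%N by rewrite /p size_mulX ?size_XsubC // -size_poly_eq0 size_XsubC.
have mQ : Q \is monic.
  rewrite monicE /Q lead_coefDl; last by rewrite size_polyN sp (leq_ltn_trans (size_polyC_leq1 _)).
  by rewrite -monicE /p monicMr ?monicX // monicXsubC.
have sQ : size Q = 3%N.
  by rewrite /Q size_polyDl sp // size_polyN (leq_ltn_trans (size_polyC_leq1 _)).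
have FE := Pdiv.RingMonic.rdivp_eq mQ F.
set q := Pdiv.CommonRing.rdivp F Q in FE.
set r := Pdiv.CommonRing.rmodp F Q in FE.
have sr : (size r <= 2)%N.
  have := Pdiv.Ring.ltn_rmodp F Q; rewrite -/r sQ monic_neq0 //.
have rE : r = (r`_0)%:P + (r`_1)%:P * 'X.
  apply/polyP => j; rewrite coefD coefC coefCM coefX.
  case: j => [|[|j]] /=; rewrite ?mulr0 ?mulr1 ?addr0 ?add0r //.
  by rewrite nth_default // (leq_trans sr).
have evQ x z : ev2 x z Q = z ^+ 2 - B.[x] * z - Cc.[x].
  rewrite /Q /p rmorphB rmorphM rmorphB !ev2_C ev2_r; ring.
have evF x z : z ^+ 2 = B.[x] * z + Cc.[x] ->
    ev2 x z F = (r`_0).[x] + (r`_1).[x] * z.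
  move=> hz; rewrite {1}FE rmorphD rmorphM evQ.
  have -> : z ^+ 2 - B.[x] * z - Cc.[x] = 0 by rewrite hz; ring.
  by rewrite mulr0 add0r {1}rE rmorphD rmorphM !ev2_C ev2_r.
move: evF; set r0 := r`_0; set r1 := r`_1 => evF.
pose P1 := r1 ^+ 2 * (B ^+ 2 + Cc *+ 4).
pose P2 := r0 ^+ 2 + r0 * r1 * B - r1 ^+ 2 * Cc.
have Hr x : E.[x] != 0 -> P1.[x] = 0 /\ P2.[x] = 0.
  move=> Ex.
  have [z1 hz1] := quad_root B.[x] Cc.[x].
  have hz2 : (B.[x] - z1) ^+ 2 = B.[x] * (B.[x] - z1) + Cc.[x].
    apply/eqP; rewrite -subr_eq0; apply/eqP.
    have -> : (B.[x] - z1) ^+ 2 - (B.[x] * (B.[x] - z1) + Cc.[x]) =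
              z1 ^+ 2 - (B.[x] * z1 + Cc.[x]) by ring.
    by rewrite hz1 subrr.
  have e1 := H x Ex z1 hz1; have e2 := H x Ex _ hz2.
  rewrite evF // in e1; rewrite evF // in e2.
  have c0 : Cc.[x] + B.[x] * z1 - z1 ^+ 2 = 0 by rewrite hz1; ring.
  split.
    have -> : P1.[x] = ((r0.[x] + r1.[x] * z1) - (r0.[x] + r1.[x] * (B.[x] - z1))) ^+ 2
        + 4%:R * r1.[x] ^+ 2 * (Cc.[x] + B.[x] * z1 - z1 ^+ 2).
      by rewrite /P1 hornerM hornerD hornerMn ?horner_exp; ring.
    by rewrite e1 e2 c0 subrr expr0n /= mulr0 addr0.
  have -> : P2.[x] = (r0.[x] + r1.[x] * z1) * (r0.[x] + r1.[x] * (B.[x] - z1))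
        - r1.[x] ^+ 2 * (Cc.[x] + B.[x] * z1 - z1 ^+ 2).
    by rewrite /P2 !hornerD !hornerN !hornerM ?horner_exp; ring.
  by rewrite e1 c0 mul0r mulr0 subrr.
have P10 : P1 = 0 by apply: (@poly_zero_cofinite E P1 En0) => x /Hr [].
have P20 : P2 = 0 by apply: (@poly_zero_cofinite E P2 En0) => x /Hr [].
move=> x0 z0 hz; rewrite evF //.
have c0 : Cc.[x0] + B.[x0] * z0 - z0 ^+ 2 = 0 by rewrite hz; ring.
move: P10; rewrite /P1 => /eqP; rewrite mulf_eq0 expf_eq0 /= => /orP [/eqP r10 | /eqP D0].
  move: P20; rewrite /P2 r10 expr0n /= mulr0 mul0r mul0r subr0 addr0 => /eqP.
  by rewrite expf_eq0 /= => /eqP ->; rewrite !horner0 mul0r addr0.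
have d0 : (2 * z0 - B.[x0]) = 0.
  suff : (2 * z0 - B.[x0]) ^+ 2 = 0 by move/eqP; rewrite expf_eq0 /= => /eqP.
  have -> : (2 * z0 - B.[x0]) ^+ 2 = (B ^+ 2 + Cc *+ 4).[x0]
            - 4%:R * (Cc.[x0] + B.[x0] * z0 - z0 ^+ 2).
    by rewrite hornerD hornerMn horner_exp; ring.
  by rewrite D0 horner0 c0 mulr0 subrr.
have := congr1 (horner^~ x0) P20; rewrite horner0.
have -> : P2.[x0] = (r0.[x0] + r1.[x0] * z0) ^+ 2
   - (2 * z0 - B.[x0]) * r1.[x0] * (r0.[x0] + r1.[x0] * z0)
   - r1.[x0] ^+ 2 * (Cc.[x0] + B.[x0] * z0 - z0 ^+ 2).
  by rewrite /P2 !hornerD !hornerN !hornerM ?horner_exp; ring.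
rewrite d0 c0 !mul0r mulr0 !subr0 => /eqP.
by rewrite expf_eq0 /= => /eqP.
Qed.

Definition swapt : 3.-tuple poly3 := [tuple 'X_i1; 'X_i0; 'X_i2].

Lemma swap_eval (h : poly3) p :
  (comp_mpoly swapt h).@[p] = h.@[mk3 (p i1) (p i0) (p i2)].
Proof.
rewrite comp_mpoly_meval; apply: meval_eq => i.
by case: i => [[|[|[|]]] Hi] //=; rewrite (tnth_nth 0) /= mevalXU.
Qed.

Lemma swap_eval' (h : poly3) x y z :
  (comp_mpoly swapt h).@[mk3 y x z] = h.@[mk3 x y z].
Proof. by rewrite swap_eval. Qed.

Lemma Rf_swap a b c d x y z :
  Rf b a c d (mk3 y x z) = Rf a b c d (mk3 x y z).
Proof. by rewrite /Rf /mk3 /=; ring. Qed.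

Lemma zsol a b c d x y : exists z, Rf a b c d (mk3 x y z) = 0.
Proof.
have [z hz] := quad_root (x * y + c) (- x ^+ 2 - y ^+ 2 + a * x + b * y + d).
exists z; rewrite /Rf /mk3 /=.
have -> : x * y * z - x ^+ 2 - y ^+ 2 - z ^+ 2 + a * x + b * y + c * z + d
   = (x * y + c) * z + (- x ^+ 2 - y ^+ 2 + a * x + b * y + d) - z ^+ 2 by ring.
by rewrite hz subrr.
Qed.

Lemma Rf_eta a b c d (p : pt3) : Rf a b c d p = Rf a b c d (mk3 (p i0) (p i1) (p i2)).
Proof. by []. Qed.

Definition V2 (y0 : CC) : 'I_3 -> Sring := fun i => nth 0 [:: ('X)%:P; cst y0; 'X] i.

Lemma ev2_hmap1 (h : poly3) x y0 z :
  ev2 x z (hmap cst (V2 y0) 1 (msize h) h) = h.@[mk3 x y0 z].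
Proof.
rewrite hmap_morph rmorph1.
rewrite (@hmap_ext _ _ id _ (mk3 x y0 z)).
- rewrite hmap_eval ?oner_neq0 // expr1n mul1r.
  by apply: meval_eq => i; rewrite divr1.
- by move=> k; exact: ev2_cst.
- case=> [[|[|[|]]] Hi].
  + exact: ev2_l.
  + exact: ev2_cst.
  + exact: ev2_r.
  + by [].
Qed.

Section Global.
Variables (a b c d : CC) (h : poly3).
Hypothesis Hnz : forall p, Rf a b c d p = 0 -> h.@[p] != 0.

Lemma Hnz_swap : forall p, Rf b a c d p = 0 -> (comp_mpoly swapt h).@[p] != 0.
Proof.
move=> p; rewrite Rf_eta Rf_swap swap_eval => E.
exact: Hnz.
Qed.

Lemma units_const : exists c0, forall p, Rf a b c d p = 0 -> h.@[p] = c0.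
Proof.
have [ys hys] := @exists_nonroot (Expoly b a c d) (Expoly_neq0 b a c d).
have [x1 hx1] := @exists_nonroot (Expoly a b c d) (Expoly_neq0 a b c d).
have [z1 hz1] := zsol a b c d x1 ys.
exists h.@[mk3 x1 ys z1].
have C1 : forall x y z, (Expoly a b c d).[x] != 0 -> Rf a b c d (mk3 x y z) = 0 ->
    h.@[mk3 x y z] = h.@[mk3 x1 ys z1].
  move=> x y z ex hr.
  have [z' hz'] := zsol a b c d x ys.
  have e2 : (comp_mpoly swapt h).@[mk3 ys x z'] = (comp_mpoly swapt h).@[mk3 ys x1 z1].
    apply: (@fiberA b a c d (comp_mpoly swapt h) Hnz_swap ys hys x z' x1 z1).
      by rewrite Rf_swap.
    by rewrite Rf_swap.
  rewrite !swap_eval' in e2.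
  exact: (etrans (@fiberA a b c d h Hnz x ex y z ys z' hr hz') e2).
move=> p hp.
set c0 := h.@[mk3 x1 ys z1] in C1 *.
pose y0 := p i1.
pose F : Sring := hmap cst (V2 y0) 1 (msize h) h - cst c0.
pose B : {poly CC} := 'X * y0%:P + c%:P.
pose Cc : {poly CC} := - 'X ^+ 2 + a%:P * 'X + (b * y0 - y0 ^+ 2 + d)%:P.
have evF x z : ev2 x z F = h.@[mk3 x y0 z] - c0.
  by rewrite /F rmorphB ev2_hmap1 ev2_cst.
have eqR x z : Rf a b c d (mk3 x y0 z) = B.[x] * z + Cc.[x] - z ^+ 2.
  rewrite /B /Cc !hornerE /Rf /mk3 /=; ring.
have := @curve_zero F B Cc (Expoly a b c d) (Expoly_neq0 a b c d).
move=> /(_ _ (p i0) (p i2)); rewrite evF.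
have -> : h.@[mk3 (p i0) y0 (p i2)] = h.@[p].
  by apply: meval_eq => i; rewrite -mk3_eta.
move=> H; apply/eqP; rewrite -subr_eq0; apply/eqP; apply: H.
  move=> x ex z hz; rewrite evF C1 ?subrr //.
  by rewrite eqR hz subrr.
apply/eqP; rewrite -subr_eq0; apply/eqP.
have E := eqR (p i0) (p i2).
rewrite -[Rf _ _ _ _ (mk3 _ _ _)]/(Rf a b c d p) hp in E.
by rewrite -opprB -E oppr0.
Qed.
End Global.

Theorem corollary4p2 (k0 k1 u0 u1 : CC) :
  k0 != 0 -> k1 != 0 -> u0 != 0 -> u1 != 0 ->
  smooth_hyp (Rt k0 k1 u0 u1) ->
  forall w : form2, symplectic_on (Rt k0 k1 u0 u1) w ->
  exists c : CC, forall p : pt3,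
    on_Ct (Rt k0 k1 u0 u1) p -> ((Rt k0 k1 u0 u1)^`M(i2)).@[p] != 0 ->
    forall u v : pt3, tangent (Rt k0 k1 u0 u1) p u -> tangent (Rt k0 k1 u0 u1) p v ->
      form2_eval w p u v = c * Omega_eval (Rt k0 k1 u0 u1) p u v.
Proof.
move=> _ _ _ _ sm w sy.
have Hnz : forall p, Rf (bar u0 * bar k0 + bar k1 * bar u1) (bar u1 * bar u0 + bar k0 * bar k1)
     (bar k0 * bar u1 + bar k1 * bar u0)
     (bar k0 ^+ 2 + bar k1 ^+ 2 + bar u0 ^+ 2 + bar u1 ^+ 2
     - bar k0 * bar k1 * bar u0 * bar u1 + 4) p = 0 ->
     (hpoly (Rt k0 k1 u0 u1) w).@[p] != 0.
  move=> p hp; apply: (@h_nonzero _ w sm sy p).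
  by rewrite /on_Ct Rt_eval.
have [c0 Hc] := units_const _ _ _ _ _ Hnz.
exists c0 => p onp g2 u v tu tv.
rewrite (@form_eq _ w p u v tu tv g2) Hc //.
by rewrite -Rt_eval.
Qed.
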